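(* Under the standing assumptions, suppose that $$\operatorname{epi}(f-g+\delta_A)^c\cap B=\Lambda\cap B.$$ Then the following are equivalent: (i) strong duality holds for $(P)-(D^F)$; (ii) strong duality holds for $(P)-(\bar D^F)$ and $\Omega\cap B=K\cap B$. (The implication (ii)$\Rightarrow$(i) holds even without the displayed hypothesis.)
   Context: Let $X$ be a nontrivial separated locally convex space with topological dual $X^*$, endowed with the topology $\sigma(X,X^* )$; $\langle x,x^*\rangle$ is the value of $x^*\in X^*$ at $x\in X$. Put $W:=X^*\times X^*\times\mathbb{R}$, $\mathbb{R}_{++}:=]0,+\infty[$ and $Z:=X^*\times X^*\times\mathbb{R}_{++}$. For $y^*\in X^*$, $\alpha\in\mathbb{R}$, let $H^-_{y^*,\alpha}:=\{x\in X:\langle x,y^*\rangle<\alpha\}$. The coupling function $c:X\times W\to\overline{\mathbb{R}}$ is $c(x,(x^*,y^*,\alpha)):=\langle x,x^*\rangle$ if $\langle x,y^*\rangle<\alpha$ and $:=+\infty$ otherwise. For $h:X\to\overline{\mathbb{R}}$ its $c$-conjugate is $h^c:W\to\overline{\mathbb{R}}$, $h^c(w):=\sup_{x\in X}\{c(x,w)-h(x)\}$, with the convention $(+\infty)+(-\infty)=(-\infty)+(+\infty)=(+\infty)-(+\infty)=(-\infty)-(-\infty)=-\infty$ (so for proper $h$, $h^c(x^*,y^*,\alpha)=h^*(x^* )$ if $\operatorname{dom}h\subseteq H^-_{y^*,\alpha}$ and $+\infty$ otherwise). Epigraphs of functions on $W$ are subsets of $W\times\mathbb{R}$. $\delta_A$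 is the indicator function of $A$. For $E\subseteq W\times\mathbb{R}$ and $e\in W\times\mathbb{R}$, $E-e:=\{z-e:z\in E\}$. Standing assumptions: $f,g:X\to\overline{\mathbb{R}}$ proper convex with $\operatorname{dom}f\subseteq\operatorname{dom}g$, $A\subseteq X$ nonempty, convention $(+\infty)-(+\infty)=+\infty$ in $f-g$; $v(P)=\inf_{x\in X}\{f(x)-g(x)+\delta_A(x)\}$. With $\varphi(u^*,v^*,\gamma;x^*,y^*,\alpha):=g^c(u^*,v^*,\gamma)-f^c(u^*-x^*,-y^*,\alpha)-\delta_A^c(x^*,y^*,\alpha)$: $v(D^F):=\sup_{(x^*,y^*,\alpha)\in Z}\inf_{(u^*,v^*,\gamma)\in\operatorname{dom}g^c}\varphi$ and $v(\bar D^F):=\inf_{(u^*,v^*,\gamma)\in\operatorname{dom}g^c}\sup_{(x^*,y^*,\alpha)\in Z}\varphi$. Strong duality for $(P)-(D^F)$ means $v(P)=v(D^F)$ and there is $(\bar x^*,\bar y^*,\bar\alpha)\in\operatorname{dom}\delta_A^c$ with $\varphi(u^*,v^*,\gamma;\bar x^*,\bar y^*,\bar\alpha)\ge v(D^F)$ for all $(u^*,v^*,\gamma)\in\operatorname{dom}g^c$. Strong duality for $(P)-(\bar D^F)$ means $v(P)=v(\bar D^F)$ and for every $(u^*,v^*,\gamma)\in\operatorname{dom}g^c$ there is $(x^*,y^*,\alpha)\in\operatorname{dom}\delta_A^c$ with $\varphi(u^*,v^*,\gamma;x^*,y^*,\alpha)\ge v(\bar D^F)$. Sets: $B:=\{0\}\times\{0\}\times\mathbb{R}_{++}\times\mathbb{R}\subseteq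 W\times\mathbb{R}$; $\Lambda:=\bigcap_{(u^*,v^*,\gamma)\in\operatorname{dom}g^c}\Big[\operatorname{epi}(f+\delta_A)^c-\big(u^*,0,0,g^c(u^*,v^*,\gamma)\big)\Big]$; $\Omega:=\bigcup_{(x^*,y^*,\alpha)\in\operatorname{dom}\delta_A^c}\ \bigcap_{(u^*,v^*,\gamma)\in\operatorname{dom}g^c}\Big[\operatorname{epi}\big(f-c(\cdot,(-x^*,-y^*,\alpha))\big)^c-\big(u^*,0,0,g^c(u^*,v^*,\gamma)-\delta_A^c(x^*,y^*,\alpha)\big)\Big]$, $K:=\bigcap_{(u^*,v^*,\gamma)\in\operatorname{dom}g^c}\ \bigcup_{(x^*,y^*,\alpha)\in\operatorname{dom}\delta_A^c}\Big[\operatorname{epi}\big(f-c(\cdot,(-x^*,-y^*,\alpha))\big)^c-\big(u^*,0,0,g^c(u^*,v^*,\gamma)-\delta_A^c(x^*,y^*,\alpha)\big)\Big]$. *)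

(* Defs.v *)
From HB Require Import structures.
From mathcomp Require Import all_boot all_order all_algebra.
From mathcomp Require Import all_classical all_reals all_analysis.
Set Implicit Arguments. Unset Strict Implicit. Unset Printing Implicit Defensive.
Import Order.TTheory GRing.Theory Num.Theory.
Import numFieldTopology.Exports.
Local Open Scope classical_set_scope.
Local Open Scope ring_scope.

Section DCDuality.
Variables (R : realType) (X : tvsType R).

(* Topological dual X^star : continuous linear functionals, represented as
   functions X -> R; <x, x^star> := x^star x.  (X^star is the same for the original
   topology and for sigma(X,X^star).) *)
Definition dualsp : set (X -> R) :=
  [set phi | (forall (a : R) (x y : X), phi (a *: x + y) = a * phi x + phi y)
             /\ continuous phi].

(* W := X^star x X^star x R ; points are ((x^star, y^star), alpha). *)
Definition Wt := ((X -> R) * (X -> R) * R)%type.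
Definition Wset : set Wt := [set w | dualsp w.1.1 /\ dualsp w.1.2].
Definition Zset : set Wt := [set w | Wset w /\ 0 < w.2].

Definition coupling (x : X) (w : Wt) : \bar R :=
  if w.1.2 x < w.2 then (w.1.1 x)%:E else +oo%E.

(* c-conjugate; mathcomp's "-" on \bar R satisfies (+oo)-(+oo) = -oo and
   (-oo)-(-oo) = -oo, as required by the convention of the paper. *)
Definition cconj (h : X -> \bar R) (w : Wt) : \bar R :=
  ereal_sup [set (coupling x w - h x)%E | x in [set: X]].

(* difference of functions with the convention (+oo) - (+oo) = +oo
   (dual extended addition, +oo absorbing) *)
Definition fsub (f g : X -> \bar R) : X -> \bar R := fun x => (f x - g x)%dE.

Definition indic (A : set X) : X -> \bar R :=
  fun x => if `[< A x >] then 0%E else +oo%E.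

Definition fadd (f g : X -> \bar R) : X -> \bar R := fun x => (f x + g x)%dE.

Definition domX (f : X -> \bar R) : set X := [set x | (f x < +oo)%E].

Definition properf (f : X -> \bar R) : Prop :=
  (forall x, f x != -oo%E) /\ exists x, (f x < +oo)%E.

Definition convexf (f : X -> \bar R) : Prop :=
  forall (x y : X) (t : R), 0 < t < 1 ->
    (f (t *: x + (1 - t) *: y)%R <= t%:E * f x + (1 - t)%R%:E * f y)%E.

Definition epiW (phi : Wt -> \bar R) : set (Wt * R) :=
  [set p | Wset p.1 /\ (phi p.1 <= p.2%:E)%E].
Definition domW (phi : Wt -> \bar R) : set Wt :=
  [set w | Wset w /\ (phi w < +oo)%E].

Definition translate (E : set (Wt * R)) (e : Wt * R) : set (Wt * R) :=
  [set ((fun x => p.1.1.1 x - e.1.1.1 x, fun x => p.1.1.2 x - e.1.1.2 x), p.1.2 - e.1.2, p.2 - e.2)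
  | p in E].

Definition zerof : X -> R := fun _ => 0.

Definition Bset : set (Wt * R) :=
  [set p | p.1.1.1 = zerof /\ p.1.1.2 = zerof /\ 0 < p.1.2].

Definition negW (w : Wt) : Wt := ((fun x => - w.1.1 x, fun x => - w.1.2 x), w.2).

Variables (f g : X -> \bar R) (A : set X).

Definition objP : X -> \bar R := fadd (fsub f g) (indic A).

Definition vP : \bar R := ereal_inf [set objP x | x in [set: X]].

Definition phiF (w w' : Wt) : \bar R :=
  (cconj g w - cconj f ((fun x => (w.1.1 x - w'.1.1 x)%R, fun x => (- w'.1.2 x)%R), w'.2)
   - cconj (indic A) w')%E.

Definition vDF : \bar R :=
  ereal_sup [set ereal_inf [set phiF w w' | w in domW (cconj g)] | w' in Zset].

Definition vDbarF : \bar R :=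
  ereal_inf [set ereal_sup [set phiF w w' | w' in Zset] | w in domW (cconj g)].

Definition strong_DF : Prop :=
  vP = vDF /\
  exists2 w', domW (cconj (indic A)) w' &
    forall w, domW (cconj g) w -> (vDF <= phiF w w')%E.

Definition strong_DbarF : Prop :=
  vP = vDbarF /\
  forall w, domW (cconj g) w ->
    exists2 w', domW (cconj (indic A)) w' & (vDbarF <= phiF w w')%E.

Definition Lambda : set (Wt * R) :=
  \bigcap_(w in domW (cconj g))
    translate (epiW (cconj (fadd f (indic A))))
              ((w.1.1, zerof), 0, fine (cconj g w)).

Definition OKpiece (w' w : Wt) : set (Wt * R) :=
  translate (epiW (cconj (fsub f (fun x => coupling x (negW w')))))
            ((w.1.1, zerof), 0, fine (cconj g w) - fine (cconj (indic A) w')).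

Definition Omega : set (Wt * R) :=
  \bigcup_(w' in domW (cconj (indic A))) \bigcap_(w in domW (cconj g)) OKpiece w' w.

Definition Kset : set (Wt * R) :=
  \bigcap_(w in domW (cconj g)) \bigcup_(w' in domW (cconj (indic A))) OKpiece w' w.

End DCDuality.

(* Main.v *)
Require Import Defs.
From HB Require Import structures.
From mathcomp Require Import all_boot all_order all_algebra.
From mathcomp Require Import all_classical all_reals all_analysis.
From mathcomp Require Import lra.
Import Order.TTheory GRing.Theory Num.Theory.
Import numFieldTopology.Exports.
Local Open Scope classical_set_scope.
Local Open Scope ring_scope.
Set Implicit Arguments. Unset Strict Implicit. Unset Printing Implicit Defensive.

Lemma coupling_ninf (R : realType) (X : tvsType R) (x : X) (w : Wt X) :
  (-oo < coupling x w)%E.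
Proof. by rewrite /coupling; case: ifP => _ //; rewrite ltNyr. Qed.

Lemma cconj_ninf (R : realType) (X : tvsType R) (h : X -> \bar R) (w : Wt X) x0 :
  (h x0 < +oo)%E -> (-oo < cconj h w)%E.
Proof.
move=> hx0; apply: (lt_le_trans _ (ereal_sup_ubound _)); last first.
  by exists x0.
have := coupling_ninf x0 w.
case: (coupling x0 w) => [c||] //; case: (h x0) hx0 => [a||] //=.
all: by rewrite ?ltNyr.
Qed.

Lemma cconj_fin (R : realType) (X : tvsType R) (h : X -> \bar R) (w : Wt X) x0 :
  (h x0 < +oo)%E -> (cconj h w < +oo)%E -> cconj h w \is a fin_num.
Proof.
move=> /(cconj_ninf w) h1 h2; rewrite fin_numE.
by rewrite (gt_eqF h1) (lt_eqF h2).
Qed.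

Lemma coupling_anti (R : realType) (X : tvsType R) (x : X) (w1 w2 : Wt X) :
  w1.1 = w2.1 -> w1.2 <= w2.2 -> (coupling x w2 <= coupling x w1)%E.
Proof.
move=> e le; rewrite /coupling e.
case: ifP => h1; case: ifP => h2 //=; rewrite ?leey //.
by move: h1; rewrite (lt_le_trans h2 le).
Qed.

Lemma cconj_anti (R : realType) (X : tvsType R) (h : X -> \bar R) (w1 w2 : Wt X) :
  w1.1 = w2.1 -> w1.2 <= w2.2 -> (cconj h w2 <= cconj h w1)%E.
Proof.
move=> e le; apply: ge_ereal_sup => _ [x _ <-].
apply: le_trans (ereal_sup_ubound _); last by exists x.
by apply: leeB => //; apply: coupling_anti.
Qed.

Lemma dual_zerof (R : realType) (X : tvsType R) : dualsp (@zerof R X).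
Proof.
split; first by move=> a x y; rewrite /zerof mulr0 addr0.
exact: cst_continuous.
Qed.

Lemma OK_iff (R : realType) (X : tvsType R) (f g : X -> \bar R) (A : set X)
  (w w' : Wt X) (beta s : R) :
  (forall x, f x != -oo%E) ->
  Wset w -> cconj g w \is a fin_num -> cconj (Defs.indic A) w' \is a fin_num ->
  0 < beta ->
  OKpiece f g A w' w ((@zerof R X, @zerof R X), beta, s) <-> ((-s)%:E <= phiF f g A w w')%E.
Proof.
move=> fP Ww Gf Df bpos.
rewrite /OKpiece /phiF -(fineK Gf) -(fineK Df).
set G := fine (cconj g w); set D := fine (cconj (Defs.indic A) w').
set F := cconj f _.
split.
- case=> [[[[p1 p2] p3] p4]] [Wp Hp] /= [e1 e2 e3 e4].
  have p1E x : p1 x = w.1.1 x.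
    by have := congr1 (fun h => h x) e1; rewrite /zerof => /eqP; rewrite subr_eq0 => /eqP.
  have p2E x : p2 x = 0.
    by have := congr1 (fun h => h x) e2; rewrite /zerof subr0.
  move: e3; rewrite subr0 => e3; subst p3.
  have {e4} e4 : p4 = s + (G - D) by rewrite -e4 subrK.
  subst p4.
  have FF : (F <= (s + (G - D))%:E)%E.
    apply: ge_ereal_sup => _ [x _ <-].
    have Tx : (coupling x ((p1,p2),beta) - fsub f (fun x => coupling x (negW w')) x <= (s + (G - D))%:E)%E.
      by apply: le_trans Hp; apply: ereal_sup_ubound; exists x.
    move: Tx; rewrite /coupling /fsub /negW /= p1E p2E bpos.
    case: (f x) (fP x) => [a||] //= _; case: ifP => h //=.
    by rewrite -!EFinD !lee_fin => H; apply: le_trans H; lra.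
  clearbody F; move: FF; case: F => [b||] //=.
    by rewrite -!EFinD !lee_fin => H; lra.
  by rewrite leey.
- move=> H.
  have FF : (F <= (s + (G - D))%:E)%E.
    move: H; clearbody F; case: F => [b||] //=; last by rewrite leNye.
    by rewrite -!EFinD !lee_fin => H; lra.
  exists ((w.1.1, @zerof R X), beta, s + (G - D)).
    split; first by split; [exact: Ww.1 | exact: dual_zerof].
    apply: ge_ereal_sup => _ [x _ <-].
    have Fx : (coupling x ((fun x : X => (w.1.1 x - w'.1.1 x)%R, fun x : X => (- w'.1.2 x)%R), w'.2) - f x <= F)%E.
      by apply: ereal_sup_ubound; exists x.
    move: Fx; rewrite /coupling /fsub /negW /= /zerof bpos.
    case: (f x) (fP x) => [a||] //= _; case: ifP => h //=.
      by rewrite -!EFinD !lee_fin => H1; move: FF; clear H; clearbody F; case: F H1 => [b||] //=;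
        rewrite ?lee_fin => H1 H2; lra.
    + move=> H1. have : F = +oo%E by apply/eqP; rewrite -leye_eq; apply: le_trans H1; exact: lexx.
      by move=> FE; move: FF; rewrite FE.
    + by move=> _; exact: leNye.
    + by move=> _; exact: leNye.
  rewrite /= subr0 addrK; congr (_,_,_,_); apply/funext => y; rewrite /zerof subrr //.
Qed.

Lemma H_le_FD (R : realType) (X : tvsType R) (f : X -> \bar R) (A : set X)
  (w w' : Wt X) : (forall x, f x != -oo%E) ->
  (cconj (fadd f (Defs.indic A)) ((w.1.1, @zerof R X), 1%R) <=
   cconj f ((fun x => (w.1.1 x - w'.1.1 x)%R, fun x => (- w'.1.2 x)%R), w'.2)
   + cconj (Defs.indic A) w')%E.
Proof.
move=> fP; apply: ge_ereal_sup => _ [x _ <-].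
set F := cconj f _; set Dl := cconj _ w'.
have Fx : (coupling x ((fun x => (w.1.1 x - w'.1.1 x)%R, fun x => (- w'.1.2 x)%R), w'.2) - f x <= F)%E.
  by apply: ereal_sup_ubound; exists x.
have Dx : (coupling x w' - Defs.indic A x <= Dl)%E.
  by apply: ereal_sup_ubound; exists x.
move: Fx Dx; rewrite /coupling /fadd /Defs.indic /zerof /= ltr01.
case: asboolP => Ax; last first.
  by case: (f x) => [a||] /=; move=> _ _; exact: leNye.
case: (f x) (fP x) => [a||] //= _; last by move=> _ _; exact: leNye.
case: ifP => h1; case: ifP => h2 /= Fx Dx.
- by apply: le_trans (leeD Fx Dx); rewrite -!EFinD lee_fin; lra.
- have DE : Dl = +oo%E by apply/eqP; rewrite -leye_eq; apply: le_trans Dx; exact: lexx.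
  have Fn : F != -oo%E by apply/negP => /eqP FE; move: Fx; rewrite FE leeNy_eq.
  by rewrite DE addey // leey.
- have FE : F = +oo%E by apply/eqP; rewrite -leye_eq; apply: le_trans Fx; exact: lexx.
  have Dn : Dl != -oo%E by apply/negP => /eqP DE; move: Dx; rewrite DE leeNy_eq.
  by rewrite FE addye // leey.
- have FE : F = +oo%E by apply/eqP; rewrite -leye_eq; apply: le_trans Fx; exact: lexx.
  have DE : Dl = +oo%E by apply/eqP; rewrite -leye_eq; apply: le_trans Dx; exact: lexx.
  by rewrite FE DE leey.
Qed.

Lemma phi_le (R : realType) (X : tvsType R) (f g : X -> \bar R) (A : set X)
  (w w' : Wt X) : (forall x, f x != -oo%E) ->
  (phiF f g A w w' <=
   cconj g w - cconj (fadd f (Defs.indic A)) ((w.1.1, @zerof R X), 1%R))%E.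
Proof.
move=> fP; have HFD := H_le_FD A w w' fP.
rewrite /phiF; move: HFD.
set F := cconj f _; set Dl := cconj _ w'; set H := cconj _ _.
move=> HFD.
have key : (- F - Dl <= - (F + Dl))%E.
  by case: F {HFD} => [a||]; case: Dl => [b||] //=; rewrite ?lee_fin ?opprD ?leey ?leNye.
rewrite -addeA; apply: leeD2l; apply: le_trans key _; by rewrite leeN2.
Qed.

Lemma lift (R : realType) (X : tvsType R) (f g : X -> \bar R) (A : set X)
  (w' : Wt X) : Wset w' ->
  Zset (w'.1, Num.max w'.2 1%R) /\
  (cconj (Defs.indic A) (w'.1, Num.max w'.2 1%R) <= cconj (Defs.indic A) w')%E /\
  forall w, (phiF f g A w w' <= phiF f g A w (w'.1, Num.max w'.2 1%R))%E.
Proof.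
move=> Ww; split; first by split => //; rewrite lt_max ltr01 orbT.
split; first by apply: cconj_anti => //; rewrite le_max lexx.
move=> w; rewrite /phiF; apply: leeB; last by apply: cconj_anti => //; rewrite le_max lexx.
by apply: leeB => //; apply: cconj_anti => //; rewrite le_max lexx.
Qed.

Lemma weak_mm (R : realType) (X : tvsType R) (f g : X -> \bar R) (A : set X) :
  (vDF f g A <= vDbarF f g A)%E.
Proof.
apply: ge_ereal_sup => _ [w' Zw' <-].
apply: le_ereal_inf_tmp => _ [w Dw <-].
apply: le_trans (ereal_inf_lbound _) _; first by exists w.
by apply: ereal_sup_ubound; exists w'.
Qed.

Lemma le_via_reals (R : realType) (a b : \bar R) :
  (forall r : R, r%:E <= a -> r%:E <= b)%E -> (a <= b)%E.
Proof.
case: a => [ra||] H; last exact: leNye.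
- exact: H.
- case: b H => [rb||] H //.
  + by exfalso; have := H (rb + 1) (leey _); rewrite lee_fin; lra.
  + by have := H 0 (leey _).
Qed.

Lemma phi_ltoo (R : realType) (X : tvsType R) (f g : X -> \bar R) (A : set X)
  (w w' : Wt X) : properf f ->
  cconj g w \is a fin_num -> cconj (Defs.indic A) w' \is a fin_num ->
  phiF f g A w w' != +oo%E.
Proof.
move=> [_ [x0 hx0]] Gf Df; rewrite /phiF -(fineK Gf) -(fineK Df).
have := cconj_ninf ((fun x => (w.1.1 x - w'.1.1 x)%R, fun x => (- w'.1.2 x)%R), w'.2) hx0.
by case: (cconj f _) => [a||].
Qed.

Theorem theorem5p5 (R : realType) (X : tvsType R)
  (f g : X -> \bar R) (A : set X) :
  hausdorff_space X ->
  (exists x : X, x != 0) ->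
  properf f -> convexf f -> properf g -> convexf g ->
  domX f `<=` domX g ->
  A !=set0 ->
  (* (ii) => (i) holds without the extra hypothesis *)
  ((strong_DbarF f g A /\ Omega f g A `&` @Bset R X = Kset f g A `&` @Bset R X) ->
     strong_DF f g A) /\
  (* under the hypothesis, (i) <=> (ii) *)
  (epiW (cconj (objP f g A)) `&` @Bset R X = Lambda f g A `&` @Bset R X ->
   (strong_DF f g A <->
    (strong_DbarF f g A /\ Omega f g A `&` @Bset R X = Kset f g A `&` @Bset R X))).
Proof.
move=> _ _ Pf _ Pg _ _ [a0 Aa0].
have fP : forall x, f x != -oo%E by case: Pf.
have Gfin : forall w, domW (cconj g) w -> cconj g w \is a fin_num.
  by move=> w [_ Hw]; case: Pg => _ [x0 hx0]; exact: (cconj_fin hx0 Hw).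
have Dfin : forall w', domW (cconj (Defs.indic A)) w' -> cconj (Defs.indic A) w' \is a fin_num.
  move=> w' [_ Hw']; apply: (@cconj_fin _ _ _ _ a0 _ Hw').
  by rewrite /Defs.indic asboolT.
have OK := fun w w' (beta s : R) (Dw : domW (cconj g) w) (Dw' : domW (cconj (Defs.indic A)) w') bpos =>
  @OK_iff R X f g A w w' beta s fP Dw.1 (Gfin w Dw) (Dfin w' Dw') bpos.
have Bq : forall r : R, (@Bset R X) ((@zerof R X, @zerof R X), 1%R, r).
  by move=> r; rewrite /Bset /=; do 2 split => //; exact: ltr01.
have part1 : (strong_DbarF f g A /\ Omega f g A `&` @Bset R X = Kset f g A `&` @Bset R X) ->
     strong_DF f g A.
  move=> [[eP HD] eOK].
  have key : exists2 w', domW (cconj (Defs.indic A)) w' &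
      forall w, domW (cconj g) w -> (vDbarF f g A <= phiF f g A w w')%E.
    case E: (vDbarF f g A) => [r||].
    - have qK : (Kset f g A `&` @Bset R X) ((@zerof R X, @zerof R X), 1%R, - r).
        split; last exact: Bq.
        move=> w Dw; have [w' Dw' hw'] := HD w Dw; exists w' => //.
        by apply/(OK w w' 1%R (-r) Dw Dw' ltr01); rewrite opprK -E.
      rewrite -eOK in qK; case: qK => [[w' Dw' Hw'] _].
      exists w' => // w Dw; have := (OK w w' 1%R (-r) Dw Dw' ltr01).1 (Hw' w Dw).
      by rewrite opprK.
    - have noD : forall w, domW (cconj g) w -> False.
        move=> w Dw; have [w' Dw' hw'] := HD w Dw; move: hw'; rewrite E leye_eq.
        by rewrite (negbTE (@phi_ltoo R X f g A w w' Pf (Gfin w Dw) (Dfin w' Dw'))).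
      have qK : (Kset f g A `&` @Bset R X) ((@zerof R X, @zerof R X), 1%R, 0%R).
        split; last exact: Bq.
        by move=> w Dw; exfalso; exact: noD w Dw.
      rewrite -eOK in qK; case: qK => [[w' Dw' _] _].
      by exists w' => // w Dw; exfalso; exact: noD w Dw.
    - have [[w Dw]|nD] := pselect (exists w, domW (cconj g) w).
        by have [w' Dw' _] := HD w Dw; exists w' => // ? _; exact: leNye.
      exfalso.
      have : (+oo <= vDbarF f g A)%E.
        by apply: le_ereal_inf_tmp => ? [w Dw _]; exfalso; apply: nD; exists w.
      by rewrite E.
  case: key => w' Dw' Hw'.
  have [Zw'' [le'' mono'']] := lift f g A Dw'.1.
  set w'' := (w'.1, _) in Zw'' le'' mono''.
  have Dw'' : domW (cconj (Defs.indic A)) w''.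
    by split; [exact: Zw''.1 | exact: le_lt_trans le'' Dw'.2].
  have Hw'' : forall w, domW (cconj g) w -> (vDbarF f g A <= phiF f g A w w'')%E.
    by move=> w Dw; exact: le_trans (Hw' w Dw) (mono'' w).
  have ge : (vDbarF f g A <= vDF f g A)%E.
    apply: le_trans (ereal_sup_ubound _); last by exists w''.
    by apply: le_ereal_inf_tmp => _ [w Dw <-]; exact: Hw'' w Dw.
  have eD : vDF f g A = vDbarF f g A by apply/le_anti; rewrite weak_mm ge.
  split; first by rewrite eP eD.
  by exists w'' => // w Dw; rewrite eD; exact: Hw'' w Dw.
split => // HL; split => //.
move=> [eP [w0 Dw0 Hw0]].
have DbP : (vDbarF f g A <= vP f g A)%E.
  apply: le_via_reals => r hr.
  have qL : (Lambda f g A `&` @Bset R X) ((@zerof R X, @zerof R X), 1%R, - r).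
    split; last exact: Bq.
    move=> w Dw.
    have h1 : (r%:E <= cconj g w - cconj (fadd f (Defs.indic A)) ((w.1.1, @zerof R X), 1%R))%E.
      apply: le_trans hr _; apply: le_trans (ereal_inf_lbound _) _; first by exists w.
      by apply: ge_ereal_sup => _ [w' _ <-]; exact: phi_le.
    exists ((w.1.1, @zerof R X), 1%R, - r + fine (cconj g w)).
      split; first by split; [exact: Dw.1.1 | exact: dual_zerof].
      move: h1; set G := fine (cconj g w); have -> : cconj g w = G%:E by rewrite fineK // Gfin.
      rewrite /=; case: (cconj (fadd f (Defs.indic A)) _) => [b||] //=.
      - by rewrite -EFinD !lee_fin => ?; lra.
      - by move=> _; exact: leNye.
    by rewrite /= subr0 addrK; congr (_,_,_,_); apply/funext => y; rewrite /zerof subrr.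
  rewrite -HL in qL; case: qL => [[_ hq] _].
  apply: le_ereal_inf_tmp => _ [x _ <-].
  have hx : (coupling x ((@zerof R X, @zerof R X), 1%R) - objP f g A x <= (- r)%:E)%E.
    by apply: le_trans hq; apply: ereal_sup_ubound; exists x.
  move: hx; rewrite /coupling /zerof /= ltr01.
  case: (objP f g A x) => [b||] //=.
    by rewrite -EFinD !lee_fin => ?; lra.
  by move=> _; exact: leey.
have eD : vDF f g A = vDbarF f g A by apply/le_anti; rewrite weak_mm /= -eP DbP.
split.
  split; first by rewrite eP eD.
  by move=> w Dw; exists w0 => //; rewrite -eD; exact: Hw0 w Dw.
apply/seteqP; split.
  by move=> q [[w' Dw' Hq] Bq']; split => // w Dw; exists w' => //; exact: Hq w Dw.
move=> q [Kq Bq']; split => //.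
move: Kq Bq'; case: q => [[[q1 q2] q3] q4] Kq [/= e1 [e2 bpos]]; subst q1 q2.
have hv : ((- q4)%:E <= vDF f g A)%E.
  rewrite eD; apply: le_ereal_inf_tmp => _ [w Dw <-].
  have [w' Dw' Hq] := Kq w Dw.
  have h := (OK w w' q3 q4 Dw Dw' bpos).1 Hq.
  have [Zw'' [_ mono'']] := lift f g A Dw'.1.
  apply: le_trans (le_trans h (mono'' w)) _; apply: ereal_sup_ubound.
  by exists (w'.1, Num.max w'.2 1%R).
exists w0 => // w Dw; apply/(OK w w0 q3 q4 Dw Dw0 bpos).
exact: le_trans hv (Hw0 w Dw).
Qed.
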